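(* Let $\mathbb{F}$, $\mathfrak g$, $\mathcal C$, $\mathcal C^{du}$, $M$ be as in the context. Let $e\in M$ be an idempotent and $m\in M_e^\times$ locally finite. Suppose that for every object $V$ of $\mathcal C$ the semisimple part $s_V$ and the locally weak unipotent part $u_V$ of the multiplicative Jordan–Chevalley decomposition of $m_V\in(End(V)_{e_V})^\times$ lie in $End_{V^{du}}(V)$. Put $s=(s_V)_V$ and $u=(u_V)_V$. Then $s$ is a semisimple element of $M_e^\times$, $u$ is a locally weak unipotent element of $M_e^\times$, $m=su=us$, and $s,u$ are uniquely determined by these properties.
   Context: Let $\mathbb F$ be a field of characteristic $0$, $\mathfrak g$ a Lie algebra over $\mathbb F$. $\mathcal C$: full subcategory of $\mathfrak g$-modules closed under isomorphism and submodules, containing a direct sum and tensor product of any two objects and a one-dimensional trivial module, with only $0\in\mathfrak g$ acting trivially on all objects. $x_V$ = action. Category of duals: point-separating $V^{du}\subseteq V^*$ with $\phi\circ x_V\in V^{du}$ ($x\in\mathfrak g$), $\psi\circ\alpha\in V^{du}$ for morphisms $\alpha:V\to W$, $\psi\in W^{du}$, $(V\oplus W)^{du}=V^{du}\oplus W^{du}$, $V^{du}\otimes W^{du}\subseteq(V\otimes W)^{du}$. $End_{V^{du}}(V)=\{\varphi:\phi\circ\varphi\in V^{du}\ \forall\phi\}$. $Nat$: families $(m_V)_V$, $m_V\in End_{V^{du}}(V)$, commuting with all morphisms. $M=\{m\in Nat:m_{V\otimes W}=m_V\otimes m_W,\ m_{V_0}=id$ for trivial one-dimensional $V_0\}$.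 For an idempotent $e\in M$, $M_e=eMe=\{m\in M:me=em=m\}$ is a monoid with unit $e$ and $M_e^\times$ denotes its unit group. For a vector space $V$: an endomorphism $y$ is locally finite if every vector lies in a finite-dimensional $y$-invariant subspace; semisimple if locally finite and its extension to $V\otimes_{\mathbb F}\overline{\mathbb F}$ is diagonalizable; locally unipotent if invertible and $y-id$ is locally nilpotent; locally weak unipotent if $V=\ker y\oplus\operatorname{Im}y$ and $y|_{\operatorname{Im}y}$ is locally unipotent. For an idempotent $f\in End(V)$, $End(V)_f=f\,End(V)\,f$ is a monoid with unit $f$; for locally finite $y\in(End(V)_f)^\times$ there are unique semisimple $s\in(End(V)_f)^\times$ and locally weak unipotent $u\in(End(V)_f)^\times$ with $y=su=us$ (multiplicative Jordan–Chevalley decomposition). An element of $M$ is called locally finite / semisimple / locally weak unipotent if it acts so on every object of $\mathcal C$. *)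

(* Defs.v *)
From HB Require Import structures.
From mathcomp Require Import all_boot all_order all_algebra.
Set Implicit Arguments.
Unset Strict Implicit.
Unset Printing Implicit Defensive.
Import GRing.Theory.
Local Open Scope ring_scope.

Section LinAlg.
Variable F : fieldType.

Definition lin (V W : lmodType F) (f : V -> W) : Prop :=
  forall (a : F) (x y : V), f (a *: x + y) = a *: f x + f y.

Definition lform (V : lmodType F) (phi : V -> F) : Prop :=
  forall (a : F) (x y : V), phi (a *: x + y) = a * phi x + phi y.

Variable V : lmodType F.

Definition in_span (s : seq V) (x : V) : Prop :=
  exists c : 'I_(size s) -> F, x = \sum_(i < size s) c i *: s`_i.

Definition lin_indep n (b : 'I_n -> V) : Prop :=
  forall c : 'I_n -> F, \sum_(i < n) c i *: b i = 0 -> forall i, c i = 0.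

Definition locally_finite (y : V -> V) : Prop :=
  forall v : V, exists s : seq V,
    in_span s v /\ forall i : nat, (i < size s)%N -> in_span s (y s`_i).

(* Semisimple: locally finite, and the extension of y to V (x) Fbar is
   diagonalizable, where iota : F -> Fbar is an algebraic closure.
   For a locally finite y this is expressed on the finite-dimensional
   y-invariant subspaces: the matrix of y on any such subspace (in any
   basis b) becomes diagonalizable over Fbar. *)
Definition semisimple (Fbar : fieldType) (iota : {rmorphism F -> Fbar})
    (y : V -> V) : Prop :=
  locally_finite y /\
  forall (n : nat) (b : 'I_n -> V) (A : 'M[F]_n),
    lin_indep b ->
    (forall i, y (b i) = \sum_(j < n) A i j *: b j) ->
    diagonalizable (map_mx iota A).

Definition locally_nilpotent (z : V -> V) : Prop :=
  forall v : V, exists k : nat, iter k z v = 0.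

Definition locally_unipotent (y : V -> V) : Prop :=
  lin y /\ bijective y /\ locally_nilpotent (fun v => y v - v).

Definition in_ker (y : V -> V) (v : V) : Prop := y v = 0.
Definition in_im (y : V -> V) (v : V) : Prop := exists w, v = y w.

(* locally weak unipotent: V = ker y (+) Im y and y restricted to Im y is
   locally unipotent (invertible on Im y, y - id locally nilpotent there) *)
Definition locally_weak_unipotent (y : V -> V) : Prop :=
  lin y /\
  (forall v, in_ker y v -> in_im y v -> v = 0) /\
  (forall v, exists k w, in_ker y k /\ in_im y w /\ v = k + w) /\
  (forall w1 w2, in_im y w1 -> in_im y w2 -> y w1 = y w2 -> w1 = w2) /\
  (forall w, in_im y w -> exists w', in_im y w' /\ y w' = w) /\
  (forall w, in_im y w -> exists k : nat, iter k (fun v => y v - v) w = 0).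

(* y is a unit of the monoid End(V)_f = f End(V) f (with unit f) *)
Definition unit_End_f (f y : V -> V) : Prop :=
  lin y /\ (forall v, y (f v) = y v /\ f (y v) = y v) /\
  exists z : V -> V, lin z /\ (forall v, z (f v) = z v /\ f (z v) = z v) /\
    forall v, y (z v) = f v /\ z (y v) = f v.

End LinAlg.

Section Lie.
Variables (F : fieldType) (g : lmodType F) (br : g -> g -> g).

Definition is_lie_algebra : Prop :=
  (forall z, lin (fun x => br x z)) /\ (forall x, lin (br x)) /\
  (forall x, br x x = 0) /\
  (forall x y z, br x (br y z) + br y (br z x) + br z (br x y) = 0).

Record gmodule := GModule { gcar : lmodType F; gact : g -> gcar -> gcar }.
Arguments gcar : clear implicits.
Arguments gact : clear implicits.

Definition is_gmod (V : gmodule) : Prop :=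
  (forall v, lin (fun x => gact V x v)) /\ (forall x, lin (gact V x)) /\
  (forall x y v, gact V (br x y) v =
                 gact V x (gact V y v) - gact V y (gact V x v)).

Definition is_hom (V W : gmodule) (f : gcar V -> gcar W) : Prop :=
  lin f /\ forall x v, f (gact V x v) = gact W x (f v).

Definition is_dsum (V W D : gmodule)
    (i1 : gcar V -> gcar D) (i2 : gcar W -> gcar D)
    (p1 : gcar D -> gcar V) (p2 : gcar D -> gcar W) : Prop :=
  [/\ is_hom i1, is_hom i2, is_hom p1 & is_hom p2] /\
  (forall v, p1 (i1 v) = v) /\ (forall w, p2 (i2 w) = w) /\
  (forall w, p1 (i2 w) = 0) /\ (forall v, p2 (i1 v) = 0) /\
  (forall d, i1 (p1 d) + i2 (p2 d) = d).

Definition is_tensor (V W T : gmodule) (t : gcar V -> gcar W -> gcar T)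
    : Prop :=
  (forall w, lin (fun v => t v w)) /\ (forall v, lin (t v)) /\
  (forall (Z : lmodType F) (b : gcar V -> gcar W -> Z),
     (forall w, lin (fun v => b v w)) -> (forall v, lin (b v)) ->
     exists h : gcar T -> Z, lin h /\ (forall v w, h (t v w) = b v w) /\
       forall h' : gcar T -> Z, lin h' -> (forall v w, h' (t v w) = b v w) ->
         forall z, h' z = h z) /\
  (forall x v w, gact T x (t v w) = t (gact V x v) w + t v (gact W x w)).

Definition trivial_1dim (V : gmodule) : Prop :=
  (exists v0 : gcar V, v0 <> 0 /\ forall v, exists a : F, v = a *: v0) /\
  (forall x v, gact V x v = 0).

Definition is_category (C : gmodule -> Prop) : Prop :=
  (forall V, C V -> is_gmod V) /\
  (forall V W (f : gcar V -> gcar W), C V -> is_gmod W -> is_hom f ->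
     bijective f -> C W) /\
  (forall V U (f : gcar U -> gcar V), C V -> is_gmod U -> is_hom f ->
     injective f -> C U) /\
  (forall V W, C V -> C W -> exists D i1 i2 p1 p2,
     C D /\ @is_dsum V W D i1 i2 p1 p2) /\
  (forall V W, C V -> C W -> exists T t, C T /\ @is_tensor V W T t) /\
  (exists V0, C V0 /\ trivial_1dim V0) /\
  (forall x, (forall V, C V -> forall v, gact V x v = 0) -> x = 0).

(* a category of duals for C: du V is the set V^du of linear forms *)
Definition dual_family := forall V : gmodule, (gcar V -> F) -> Prop.

Definition is_category_of_duals (C : gmodule -> Prop) (du : dual_family)
    : Prop :=
  (forall V, C V -> forall phi, du V phi -> lform phi) /\
  (forall V, C V -> du V (fun _ => 0)) /\
  (forall V, C V -> forall (a : F) phi psi, du V phi -> du V psi ->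
     du V (fun v => a * phi v + psi v)) /\
  (forall V, C V -> forall v, (forall phi, du V phi -> phi v = 0) -> v = 0) /\
  (forall V, C V -> forall phi x, du V phi -> du V (fun v => phi (gact V x v))) /\
  (forall V W (alpha : gcar V -> gcar W), C V -> C W -> is_hom alpha ->
     forall psi, du W psi -> du V (fun v => psi (alpha v))) /\
  (forall V W D i1 i2 p1 p2, C V -> C W -> C D -> @is_dsum V W D i1 i2 p1 p2 ->
     forall chi, lform chi ->
       (du D chi <-> du V (fun v => chi (i1 v)) /\ du W (fun w => chi (i2 w)))) /\
  (forall V W T t, C V -> C W -> C T -> @is_tensor V W T t ->
     forall phi psi chi, du V phi -> du W psi -> lform chi ->
       (forall v w, chi (t v w) = phi v * psi w) -> du T chi).

Definition End_du (du : dual_family) (V : gmodule) (f : gcar V -> gcar V)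
    : Prop :=
  lin f /\ forall phi, du V phi -> du V (fun v => phi (f v)).



Definition gfamily := forall V : gmodule, gcar V -> gcar V.

Definition is_Nat (C : gmodule -> Prop) (du : dual_family) (m : gfamily)
    : Prop :=
  (forall V, C V -> End_du du (m V)) /\
  (forall V W (alpha : gcar V -> gcar W), C V -> C W -> is_hom alpha ->
     forall v, alpha (m V v) = m W (alpha v)).

Definition in_M (C : gmodule -> Prop) (du : dual_family) (m : gfamily)
    : Prop :=
  is_Nat C du m /\
  (forall V W T t, C V -> C W -> C T -> @is_tensor V W T t ->
     forall v w, m T (t v w) = t (m V v) (m W w)) /\
  (forall V0, C V0 -> trivial_1dim V0 -> forall v, m V0 v = v).

Definition idempotent_M C du (e : gfamily) : Prop :=
  in_M C du e /\ forall V, C V -> forall v, e V (e V v) = e V v.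

Definition in_Me C du (e m : gfamily) : Prop :=
  in_M C du m /\ forall V, C V -> forall v, m V (e V v) = m V v /\ e V (m V v) = m V v.

Definition unit_Me C du (e m : gfamily) : Prop :=
  in_Me C du e m /\ exists n, in_Me C du e n /\
    forall V, C V -> forall v, m V (n V v) = e V v /\ n V (m V v) = e V v.

Definition locally_finite_M (C : gmodule -> Prop) (m : gfamily) : Prop :=
  forall V, C V -> locally_finite (m V).

Definition semisimple_M (Fbar : fieldType) (iota : {rmorphism F -> Fbar})
    (C : gmodule -> Prop) (m : gfamily) : Prop :=
  forall V, C V -> semisimple iota (m V).

Definition locally_weak_unipotent_M (C : gmodule -> Prop) (m : gfamily) : Prop :=
  forall V, C V -> locally_weak_unipotent (m V).

End Lie.
Arguments End_du [F g] du V f.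

(* Main.v *)
Require Import Defs.
From HB Require Import structures.
From mathcomp Require Import all_boot all_order all_algebra.
From mathcomp Require Import mxtens.
From Stdlib Require Import Classical.
Set Implicit Arguments.
Unset Strict Implicit.
Unset Printing Implicit Defensive.
Import GRing.Theory.
Local Open Scope ring_scope.

Definition nilpm (R : pzRingType) n (A : 'M[R]_n) : Prop :=
  exists k, forall z : 'rV[R]_n, iter k (fun z => z *m A) z = 0.

Definition Peig (K : fieldType) n (S : 'M[K]_n) : Prop :=
  exists P : 'M[K]_n, P \in unitmx /\
    forall i, exists d : K, row i P *m S = d *: row i P.

Lemma iter_mulmx (R : pzRingType) n (A : 'M[R]_n.+1) k (z : 'rV_n.+1) :
  iter k (fun z => z *m A) z = z *m A ^+ k.
Proof.
elim: k => [|k IH] /=; first by rewrite expr0 mulmx1.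
by rewrite IH exprSr mulmxA.
Qed.

Section MPRES.
Variables (F K : fieldType) (iota : {rmorphism F -> K}).

Lemma eig_gen n (M S : 'M[K]_n.+1) (y : 'rV_n.+1) a j :
  S *m M = M *m S -> y *m S = a *: y ->
  y *m (M - a%:M) ^+ j = y *m (M - S) ^+ j.
Proof.
move=> SM ya; elim: j => [|j IH]; first by rewrite !expr0.
rewrite !exprSr !mulmxA IH.
have cS : GRing.comm S ((M - S) ^+ j).
  apply: commrX; rewrite /GRing.comm mulrBr mulrBl; congr (_ - _).
  exact: SM.
have : y *m (M - S) ^+ j *m S = a *: (y *m (M - S) ^+ j).
  by rewrite -mulmxA -[(M - S) ^+ j *m S]/(((M - S) ^+ j) * S) -cS /= mulmxA ya scalemxAl.
move=> h.
rewrite !mulmxBr h mul_mx_scalar.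
by [].
Qed.

Lemma mpres_main n (M S : 'M[K]_n.+1) k :
  S *m M = M *m S -> (M - S) ^+ k = 0 ->
  (exists P : 'M[K]_n.+1, P \in unitmx /\
    forall i, exists d : K, row i P *m S = d *: row i P) ->
  exists R : {poly K}, S = horner_mx M R.
Proof.
move=> SM Nk [P [Pu Peig]].
have Peig' i : exists d, row i P *m S == d *: row i P.
  by have [d /eqP] := Peig i; exists d.
pose d i := xchoose (Peig' i).
have dP i : row i P *m S = d i *: row i P := eqP (xchooseP (Peig' i)).
pose L := undup [seq d i | i <- enum 'I_n.+1].
have Lu : uniq L := undup_uniq _.
have dL i : d i \in L by rewrite mem_undup; apply: map_f; rewrite mem_enum.
pose Q x := \prod_(y <- [seq y <- L | y != x]) ('X - y%:P) ^+ k.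
have cop x : coprimep (('X - x%:P) ^+ k) (Q x).
  apply: coprimep_expl; rewrite /Q; elim: [seq y <- L | y != x] (filter_all (fun y => y != x) L) => [|y l IH] /=.
    by rewrite big_nil coprimep1.
  case/andP => yx al; rewrite big_cons coprimepMr IH // andbT.
  apply: coprimep_expr; rewrite coprimep_XsubC root_XsubC.
  by [].
have Bez x : exists uv : {poly K} * {poly K}, uv.1 * ('X - x%:P) ^+ k + uv.2 * Q x == 1.
  by have /Bezout_eq1_coprimepP [uv /eqP] := cop x; exists uv.
pose uv x := xchoose (Bez x).
have uvP x : (uv x).1 * ('X - x%:P) ^+ k + (uv x).2 * Q x = 1 := eqP (xchooseP (Bez x)).
pose E x := (uv x).2 * Q x.
pose R := \sum_(x <- L) x *: E x.
exists R.
have kill i (p : {poly K}) : row i P *m horner_mx M (('X - (d i)%:P) ^+ k * p) = 0.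
  rewrite rmorphM /= mulmxA rmorphXn rmorphB /= horner_mx_X horner_mx_C.
  by rewrite (eig_gen _ SM (dP i)) Nk mulmx0 mul0mx.
have key i x : row i P *m horner_mx M (E x) = (x == d i)%:R *: row i P.
  have [->|ne] := eqVneq x (d i).
    have -> : E (d i) = 1 - ('X - (d i)%:P) ^+ k * (uv (d i)).1.
      by rewrite -(uvP (d i)) (mulrC (uv (d i)).1) [X in X - _]addrC addrK.
    rewrite rmorphB /= rmorph1 mulmxBr mulmx1 kill subr0 scale1r //.
  have inQ : d i \in [seq y <- L | y != x] by rewrite mem_filter eq_sym ne dL.
  rewrite /E /Q (bigD1_seq _ inQ (filter_uniq _ Lu)) /= mulrCA kill scale0r //.
have -> : S = invmx P *m (P *m S) by rewrite mulKmx.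
have -> : P *m S = P *m horner_mx M R.
  apply/row_matrixP => i; rewrite !row_mul dP.
  rewrite /R rmorph_sum /= mulmx_sumr.
  rewrite (eq_bigr (fun x => (x * (x == d i)%:R) *: row i P)); last first.
    move=> x _; rewrite linearZ /= -scalemxAr key scalerA //.
  rewrite -scaler_suml (bigD1_seq _ (dL i) Lu) /= eqxx mulr1 big1_seq ?addr0 //.
  by move=> x /andP[/negPf -> _]; rewrite mulr0.
by rewrite mulKmx.
Qed.

End MPRES.

Section MPRES2.
Variables (F K : fieldType) (iota : {rmorphism F -> K}).
Local Notation "A ^f" := (map_mx iota A) : ring_scope.

Lemma map_mxXn n (A : 'M[F]_n.+1) k : (A ^+ k)^f = (A^f) ^+ k.
Proof.
elim: k => [|k IH]; first by rewrite !expr0 -[1 : 'M_n.+1]/(1%:M) map_mx1.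
by rewrite !exprSr -[_ * A]/(_ *m A) map_mxM IH.
Qed.

Lemma mpres n m (M S : 'M[F]_n) (B : 'M[F]_(m, n)) :
  S *m M = M *m S -> nilpm (M - S) -> Peig (S^f) ->
  (B *m M <= B)%MS -> (B *m S <= B)%MS.
Proof.
case: n M S B => [|n] M S B SM [k Nk] Pe BM.
  by rewrite [B *m S]thinmx0 sub0mx.
case: m B BM => [|m] B BM.
  by rewrite [B *m S]flatmx0 sub0mx.
have Nk0 : (M - S) ^+ k = 0.
  by apply/row_matrixP => i; rewrite rowE -iter_mulmx Nk; apply/rowP => j; rewrite !mxE.
have Nkb : (M^f - S^f) ^+ k = 0 by rewrite -map_mxB -map_mxXn Nk0 map_mx0.
have SMb : S^f *m M^f = M^f *m S^f by rewrite -!map_mxM SM.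
have [R HR] := mpres_main SMb Nkb Pe.
have BMb : stablemx B^f M^f by rewrite -map_mxM map_submx.
have := horner_mx_stable R BMb.
by rewrite -HR -map_mxM map_submx.
Qed.

End MPRES2.

Section LinB.
Variable F : fieldType.
Implicit Types V W : lmodType F.

Lemma lin0 V W (f : V -> W) : lin f -> f 0 = 0.
Proof.
move=> hf; have h := hf 1 0 0; rewrite scaler0 add0r scale1r in h.
by apply: (addrI (f 0)); rewrite addr0 -h.
Qed.

Lemma linD V W (f : V -> W) : lin f -> forall x y, f (x + y) = f x + f y.
Proof. by move=> hf x y; have := hf 1 x y; rewrite !scale1r. Qed.

Lemma linZ V W (f : V -> W) : lin f -> forall a x, f (a *: x) = a *: f x.
Proof. by move=> hf a x; have := hf a x 0; rewrite (lin0 hf) !addr0. Qed.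

Lemma linN V W (f : V -> W) : lin f -> forall x, f (- x) = - f x.
Proof. by move=> hf x; rewrite -scaleN1r linZ // scaleN1r. Qed.

Lemma linB V W (f : V -> W) : lin f -> forall x y, f (x - y) = f x - f y.
Proof. by move=> hf x y; rewrite linD // linN. Qed.

Lemma lin_sum V W (f : V -> W) : lin f ->
  forall (I : Type) (r : seq I) (P : pred I) (G : I -> V),
  f (\sum_(i <- r | P i) G i) = \sum_(i <- r | P i) f (G i).
Proof. by move=> hf I r P G; apply: (big_morph f (linD hf) (lin0 hf)). Qed.

Lemma lin_comp (U : lmodType F) V W (f : V -> W) (g : U -> V) :
  lin f -> lin g -> lin (fun x => f (g x)).
Proof. by move=> hf hg a x y; rewrite hg hf. Qed.

Lemma lin_idf V : lin (fun x : V => x).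
Proof. by []. Qed.

Lemma lin_iter V (f : V -> V) : lin f -> forall k, lin (iter k f).
Proof.
move=> hf; elim=> [|k IH] a x y /=; first by [].
by rewrite IH hf.
Qed.

Lemma lin_subf V W (f g : V -> W) : lin f -> lin g -> lin (fun x => f x - g x).
Proof.
move=> hf hg a x y; rewrite hf hg scalerBr.
by rewrite opprD addrACA.
Qed.

Lemma lin_addf V W (f g : V -> W) : lin f -> lin g -> lin (fun x => f x + g x).
Proof.
move=> hf hg a x y; rewrite hf hg scalerDr.
by rewrite addrACA.
Qed.

Definition ev V n (b : 'I_n -> V) (c : 'rV[F]_n) : V := \sum_i c 0 i *: b i.

Lemma ev_lin V n (b : 'I_n -> V) : lin (ev b).
Proof.
move=> a c c'; rewrite /ev scaler_sumr -big_split /=.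
by apply: eq_bigr => i _; rewrite !mxE scalerDl scalerA.
Qed.

Lemma ev_comp V W n (b : 'I_n -> V) (f : V -> W) c :
  lin f -> f (ev b c) = ev (fun i => f (b i)) c.
Proof. by move=> hf; rewrite /ev lin_sum //; apply: eq_bigr => i _; rewrite linZ. Qed.

Lemma ev_delta V n (b : 'I_n -> V) i : ev b (delta_mx 0 i) = b i.
Proof.
rewrite /ev (bigD1 i) //= mxE !eqxx scale1r big1 ?addr0 //.
by move=> j /negPf ji; rewrite mxE ji andbF scale0r.
Qed.

Lemma ev_mat V n (b : 'I_n -> V) (y : V -> V) (A : 'M[F]_n) :
  lin y -> (forall i, y (b i) = \sum_(j < n) A i j *: b j) ->
  forall c, y (ev b c) = ev b (c *m A).
Proof.
move=> hy hb c; rewrite ev_comp //.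
rewrite /ev; under eq_bigr => i _ do rewrite hb scaler_sumr.
rewrite exchange_big; apply: eq_bigr => j _; rewrite mxE scaler_suml.
by apply: eq_bigr => i _; rewrite scalerA.
Qed.

Lemma indep_inj V n (b : 'I_n -> V) : lin_indep b ->
  forall c c', ev b c = ev b c' -> c = c'.
Proof.
move=> hb c c' e.
have h := hb (fun i => c 0 i - c' 0 i).
have : \sum_(i < n) (c 0 i - c' 0 i) *: b i = 0.
  under eq_bigr do rewrite scalerBl.
  by rewrite sumrB -/(ev b c) -/(ev b c') e subrr.
move/h => hi; apply/rowP => j; apply/eqP; rewrite -subr_eq0; apply/eqP; exact: hi.
Qed.

End LinB.

Section Sub.
Variable F : fieldType.

Lemma subspace_mx n (P : 'rV[F]_n -> Prop) :
  P 0 -> (forall a x y, P x -> P y -> P (a *: x + y)) ->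
  exists B : 'M[F]_n, forall x, P x <-> (x <= B)%MS.
Proof.
move=> P0 PC.
have PD x y : P x -> P y -> P (x + y).
  by move=> Px Py; have := PC 1 x y Px Py; rewrite scale1r.
have PZ a x : P x -> P (a *: x).
  by move=> Px; have := PC a x 0 Px P0; rewrite addr0.
have RS m (A : 'M_(m, n)) : (forall i, P (row i A)) -> forall x, (x <= A)%MS -> P x.
  move=> HA x /submxP [c ->]; rewrite mulmx_sum_row.
  apply: (big_ind P) => //.
  by move=> i _; apply: PZ; apply: HA.
suff main : forall d (B : 'M_n), (forall i, P (row i B)) -> (n - \rank B <= d)%N ->
    exists B' : 'M_n, forall x, P x <-> (x <= B')%MS.
  apply: (main n 0) => [i|]; last exact: leq_subr.
  by have -> : row i (0 : 'M[F]_n) = 0 by apply/rowP => j; rewrite !mxE.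
elim=> [|d IH] B HB hd.
  exists B => x; split; last exact: RS.
  move=> _; apply: submx_full; rewrite /row_full eqn_leq rank_leq_col /=.
  by rewrite -subn_eq0 -leqn0.
case: (classic (exists x, P x /\ ~~ (x <= B)%MS)) => [[x [Px nxB]]|nex]; last first.
  exists B => x; split; last exact: RS.
  move=> Px; apply/negPn/negP => nxB; apply: nex; exists x; split => //; exact/negP.
have HB2 : forall y, (y <= B + x)%MS -> P y.
  move=> y /sub_addsmxP [u ->]; apply: PD; first by apply: (RS _ _ HB); exact: submxMl.
  apply: (RS _ x) => [i|]; first by rewrite row_id.
  exact: submxMl.
apply: (IH (B + x)%MS) => [i|]; first by apply: HB2; exact: row_sub.
have lt : (\rank B < \rank (B + x)%MS)%N.
  apply: rank_ltmx; rewrite ltmxE addsmxSl /=; apply/negP => hB.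
  by move/negP: nxB; apply; apply: submx_trans hB; exact: addsmxSr.
have := rank_leq_col (B + x)%MS.
move: hd lt; set r1 := \rank B; set r2 := \rank _.
move=> hd lt le2; apply: leq_trans (_ : n - r1 - 1 <= d)%N.
  by rewrite -subnDA addn1 leq_sub2l.
by rewrite leq_subLR add1n.
Qed.

Lemma basis_ex (V : lmodType F) k (g : 'I_k -> V) :
  exists n (b : 'I_n -> V), lin_indep b /\
    forall x, (exists c, x = ev g c) <-> (exists c, x = ev b c).
Proof.
have ev0 : ev g 0 = 0 by rewrite /ev big1 // => i _; rewrite mxE scale0r.
have evC : forall a x y, ev g x = 0 -> ev g y = 0 -> ev g (a *: x + y) = 0.
  by move=> a x y hx hy; rewrite ev_lin hx hy scaler0 addr0.
have [B HB] := @subspace_mx k (fun c => ev g c = 0) ev0 evC.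
pose C := (B^C)%MS.
pose R := row_base C.
pose b i := ev g (row i R).
have evR c : ev b c = ev g (c *m R).
  rewrite (mulmx_sum_row c R) (lin_sum (ev_lin g)) /ev /b.
  by apply: eq_bigr => i _; rewrite -/(ev g _) -/(ev g _) (linZ (ev_lin g)).
exists (\rank C), b; split.
  move=> cf H.
  pose c := \row_i cf i.
  have e0 : ev g (c *m R) = 0.
    by rewrite -evR -H /ev; apply: eq_bigr => i _; rewrite mxE.
  have cR0 : c *m R = 0.
    apply/eqP; rewrite -submx0 -(capmx_compl B) sub_capmx; apply/andP; split.
      exact/HB.
    by rewrite -/C; apply: submx_trans (submxMl c R) _; rewrite eq_row_base.
  have c0 : c = 0.
    apply: (row_free_inj (row_base_free C)); by rewrite cR0 mul0mx.
  move=> i; have := congr1 (fun m : 'rV_(\rank C) => m 0 i) c0; by rewrite !mxE.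
move=> x; split=> [[c ->]|[c ->]]; last by exists (c *m R); rewrite evR.
have : (c <= B + C)%MS by apply: submx_full; exact: addsmx_compl_full.
case/sub_addsmxP => [[u1 u2] /= ->].
have : (u2 *m C <= R)%MS by rewrite eq_row_base submxMl.
case/submxP => w hw.
exists w; rewrite evR -hw (linD (ev_lin g)).
have -> : ev g (u1 *m B) = 0 by apply/HB; exact: submxMl.
by rewrite add0r.
Qed.

End Sub.

Lemma iter_mul0 (R : pzRingType) n (A : 'M[R]_n) j :
  iter j (fun z : 'rV_n => z *m A) 0 = 0.
Proof. by elim: j => //= j ->; rewrite mul0mx. Qed.

Lemma nilpm_ge (R : pzRingType) n (A : 'M[R]_n) k j (z : 'rV_n) :
  iter k (fun z => z *m A) z = 0 -> (k <= j)%N -> iter j (fun z => z *m A) z = 0.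
Proof.
move=> h kj; rewrite -(subnK kj) iterD h; exact: iter_mul0.
Qed.

Lemma iter_block (R : pzRingType) n1 n2 (A : 'M[R]_n1) (B : 'M[R]_n2) j
  (a : 'rV[R]_n1) (b : 'rV[R]_n2) :
  iter j (fun z : 'rV_(n1 + n2) => z *m block_mx A 0 0 B) (row_mx a b) =
  row_mx (iter j (fun z => z *m A) a) (iter j (fun z => z *m B) b).
Proof.
elim: j => //= j ->.
by rewrite mul_row_block !mulmx0 ?mul0mx addr0 add0r.
Qed.

Lemma nilpm_block (R : pzRingType) n1 n2 (A : 'M[R]_n1) (B : 'M[R]_n2) :
  nilpm A -> nilpm B -> nilpm (block_mx A 0 0 B).
Proof.
move=> [k1 h1] [k2 h2]; exists (k1 + k2) => z.
rewrite -(hsubmxK z) iter_block.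
rewrite (nilpm_ge (h1 _) (leq_addr _ _)) (nilpm_ge (h2 _) (leq_addl _ _)).
exact: row_mx0.
Qed.

Lemma row0mx (R : pzRingType) m n (i : 'I_m) : row i (0 : 'M[R]_(m, n)) = 0.
Proof. by apply/rowP => j; rewrite !mxE. Qed.

Lemma Peig_block (K : fieldType) n1 n2 (S1 : 'M[K]_n1) (S2 : 'M[K]_n2) :
  Peig S1 -> Peig S2 -> Peig (block_mx S1 0 0 S2).
Proof.
move=> [P1 [u1 h1]] [P2 [u2 h2]]; exists (block_mx P1 0 0 P2); split.
  by rewrite unitmxE det_ublock unitrM -!unitmxE u1 u2.
move=> i; rewrite [block_mx P1 _ _ _]block_mxEv.
case: (splitP i) => j hj.
  have -> : i = lshift n2 j by apply/val_inj.
  rewrite rowKu row_row_mx row0mx; have [d hd] := h1 j; exists d.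
  by rewrite mul_row_block ?mulmx0 ?mul0mx ?addr0 ?add0r hd scale_row_mx scaler0.
have -> : i = rshift n1 j by apply/val_inj.
rewrite rowKd row_row_mx row0mx; have [d hd] := h2 j; exists d.
by rewrite mul_row_block ?mulmx0 ?mul0mx ?addr0 ?add0r hd scale_row_mx scaler0.
Qed.

Section CoreT.
Variables (F K : fieldType) (iota : {rmorphism F -> K}).
Local Notation "A ^f" := (map_mx iota A) : ring_scope.

Lemma core_t (W : lmodType F) (mW : W -> W) n1 n2
  (E1 : 'rV[F]_n1 -> W) (E2 : 'rV[F]_n2 -> W)
  (M1 S1 : 'M[F]_n1) (M2 S2 : 'M[F]_n2) :
  lin E1 -> lin E2 ->
  (forall c, E1 (c *m M1) = mW (E1 c)) -> (forall c, E2 (c *m M2) = mW (E2 c)) ->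
  S1 *m M1 = M1 *m S1 -> S2 *m M2 = M2 *m S2 ->
  nilpm (M1 - S1) -> nilpm (M2 - S2) ->
  Peig (S1^f) -> Peig (S2^f) ->
  forall c1 c2, E1 c1 = E2 c2 -> E1 (c1 *m S1) = E2 (c2 *m S2).
Proof.
move=> hE1 hE2 hM1 hM2 SM1 SM2 N1 N2 P1 P2 c1 c2 e.
pose P (z : 'rV[F]_(n1 + n2)) := E1 (lsubmx z) = E2 (rsubmx z).
have P0 : P 0 by rewrite /P !linear0 (lin0 hE1) (lin0 hE2).
have PC a x y : P x -> P y -> P (a *: x + y).
  by rewrite /P !linearP /= hE1 hE2 => -> ->.
have [B HB] := subspace_mx P0 PC.
pose M := block_mx M1 0 0 M2.
pose S := block_mx S1 0 0 S2.
have BM : (B *m M <= B)%MS.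
  apply/row_subP => i; rewrite row_mul; apply/HB.
  have h : P (row i B) by apply/HB; exact: row_sub.
  move: h; rewrite /P -[row i B]hsubmxK /M mul_row_block ?mulmx0 ?mul0mx ?addr0 ?add0r.
  by rewrite !row_mxKl !row_mxKr hM1 hM2 => ->.
have SM : S *m M = M *m S.
  by rewrite /S /M !mulmx_block ?mulmx0 ?mul0mx ?addr0 ?add0r SM1 SM2.
have NS : nilpm (M - S).
  rewrite /M /S opp_block_mx add_block_mx !oppr0 !addr0.
  exact: nilpm_block.
have PS : Peig (S^f).
  rewrite /S map_block_mx !map_mx0; exact: Peig_block.
have BS := mpres SM NS PS BM.
have : P (row_mx c1 c2) by rewrite /P row_mxKl row_mxKr.
move/HB => h.
have : (row_mx c1 c2 *m S <= B)%MS by apply: submx_trans BS; rewrite submxMr.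
move/HB; rewrite /P /S mul_row_block ?mulmx0 ?mul0mx ?addr0 ?add0r.
by rewrite row_mxKl row_mxKr.
Qed.

End CoreT.

Lemma diag_Peig (K : fieldType) n (A : 'M[K]_n) : diagonalizable A -> Peig A.
Proof.
case=> P Pu /(diagonalizable_forLR Pu) [D hA].
exists P; split => // i; exists (D 0 i).
rewrite -row_mul hA mxpoly.conjVmx ?unitmx_inv // !mulmxA mulmxV // mul1mx.
by rewrite mul_diag_mx; apply/rowP => j; rewrite !mxE.
Qed.

Section Model.
Variable F : fieldType.

Definition sfam (V : lmodType F) (l : seq V) : 'I_(size l) -> V := fun i => l`_i.
Arguments sfam [V] l i.
Definition spn (V : lmodType F) (l : seq V) (y : V) := exists c, y = ev (sfam l) c.

Variable V : lmodType F.
Implicit Types (l : seq V) (y : V).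

Lemma spn0 l : spn l 0.
Proof. by exists 0; rewrite /ev big1 // => i _; rewrite mxE scale0r. Qed.

Lemma spnC l a y y' : spn l y -> spn l y' -> spn l (a *: y + y').
Proof. by move=> [c ->] [c' ->]; exists (a *: c + c'); rewrite ev_lin. Qed.

Lemma spnD l y y' : spn l y -> spn l y' -> spn l (y + y').
Proof. by move=> h h'; have := spnC 1 h h'; rewrite scale1r. Qed.

Lemma spn_mem l y : y \in l -> spn l y.
Proof.
move=> yl; have yl' : (index y l < size l)%N by rewrite index_mem.
by exists (delta_mx 0 (Ordinal yl')); rewrite ev_delta /sfam /= nth_index.
Qed.

Lemma spn_ev l n (f : 'I_n -> V) c : (forall i, spn l (f i)) -> spn l (ev f c).
Proof.
move=> hf; rewrite /ev; apply: (big_ind (spn l)); first exact: spn0.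
  by move=> ? ? ; apply: spnD.
by move=> i _; have := spnC (c 0 i) (hf i) (spn0 l); rewrite addr0.
Qed.

Lemma spn_nth l (i : 'I_(size l)) : spn l (sfam l i).
Proof. by exists (delta_mx 0 i); rewrite ev_delta. Qed.

Lemma spn_sub l l' y : (forall z, z \in l -> spn l' z) -> spn l y -> spn l' y.
Proof.
move=> h [c ->]; apply: spn_ev => i; apply: h; exact: mem_nth.
Qed.

Lemma spn_inv l (f : V -> V) : lin f -> (forall z, z \in l -> spn l (f z)) ->
  forall y, spn l y -> spn l (f y).
Proof.
move=> hf h y [c ->]; rewrite ev_comp //; apply: spn_ev => i; apply: h.
exact: mem_nth.
Qed.

Lemma in_span_spn l y : in_span l y -> spn l y.
Proof.
by case=> c ->; exists (\row_i c i); rewrite /ev; apply: eq_bigr => i _; rewrite mxE.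
Qed.

Lemma iter_ge (nn : V -> V) : lin nn -> forall k j z,
  iter k nn z = 0 -> (k <= j)%N -> iter j nn z = 0.
Proof.
move=> hn k j z h kj; rewrite -(subnK kj) iterD h; exact: (lin0 (lin_iter hn _)).
Qed.

Lemma bound_seq (nn : V -> V) : lin nn -> forall l : seq V,
  (forall z, z \in l -> exists k, iter k nn z = 0) ->
  exists N, forall z, z \in l -> iter N nn z = 0.
Proof.
move=> hn; elim=> [|z l IH] h; first by exists 0%N.
have [k hk] := h z (mem_head _ _).
have [N hN] := IH (fun z' hz' => h z' (@mem_behead _ (z :: l) z' hz')).
exists (maxn k N) => z'; rewrite in_cons => /orP [/eqP ->|hz'].
  exact: iter_ge hk (leq_maxl _ _).
exact: iter_ge (hN _ hz') (leq_maxr _ _).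
Qed.

Lemma mx_ext n p (A B : 'M[F]_(n, p)) : (forall c : 'rV_n, c *m A = c *m B) -> A = B.
Proof. by move=> h; apply/row_matrixP => i; rewrite !rowE h. Qed.

End Model.
Arguments sfam [F V] l i.

Section Model2.
Variables (F K : fieldType) (phi : {rmorphism F -> K}).
Variable V : lmodType F.

Definition model (m s : V -> V) (x : V) :=
  exists n (b : 'I_n -> V) (c : 'rV[F]_n) (M S : 'M[F]_n),
    [/\ x = ev b c, (forall c, m (ev b c) = ev b (c *m M)),
        (forall c, s (ev b c) = ev b (c *m S)),
        S *m M = M *m S & nilpm (M - S) /\ Peig (map_mx phi S)].

Lemma pair_model (m s : V -> V) :
  lin m -> lin s -> (forall v, m (s v) = s (m v)) -> locally_finite s ->
  locally_nilpotent (fun v => m v - s v) ->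
  (forall n (b : 'I_n -> V) (A : 'M[F]_n), lin_indep b ->
     (forall i, s (b i) = \sum_(j < n) A i j *: b j) ->
     diagonalizable (map_mx phi A)) ->
  forall x, model m s x.
Proof.
move=> hm hs ms lfs lnn diag x.
pose nn := fun v => m v - s v.
have hnn : lin nn by apply: lin_subf.
have snn v : s (nn v) = nn (s v) by rewrite /nn (linB hs) ms.
have sit j v : s (iter j nn v) = iter j nn (s v).
  by elim: j => //= j IH; rewrite snn IH.
have [t [xt tinv]] := lfs x.
have tinv' : forall z, z \in t -> spn t (s z).
  move=> z zt; rewrite -(nth_index 0 zt); apply: in_span_spn; apply: tinv.
  by rewrite index_mem.
have [N hN] := @bound_seq _ _ _ hnn t (fun z _ => lnn z).
pose g := [seq iter j nn z | z <- t, j <- iota 0 N.+1].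
have ing z j : z \in t -> (j <= N)%N -> iter j nn z \in g.
  move=> zt jN; apply/allpairsP; exists (z, j); split => //.
  by change (is_true (j \in iota 0 N.+1)); rewrite mem_iota add0n ltnS.
have tg : forall z, z \in t -> spn g z.
  by move=> z zt; apply: spn_mem; exact: (ing z 0%N).
have sinv : forall z, z \in g -> spn g (s z).
  move=> z /allpairsP [[z0 j] [z0t jN ->]]; rewrite /= in z0t jN *.
  change (is_true (j \in iota 0 N.+1)) in jN.
  rewrite sit; have [c ->] := tinv' _ z0t.
  rewrite ev_comp; last exact: lin_iter.
  apply: spn_ev => i; apply: spn_mem; apply: ing; first exact: mem_nth.
  by move: jN; rewrite mem_iota leq0n add0n ltnS.
have ninv : forall z, z \in g -> spn g (nn z).
  move=> z /allpairsP [[z0 j] [z0t jN ->]]; rewrite /= in z0t jN *.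
  change (is_true (j \in iota 0 N.+1)) in jN.
  move: jN; rewrite mem_iota leq0n add0n ltnS /= leq_eqVlt; case/orP => [/eqP ->|jN].
    by rewrite -iterS /= hN // (lin0 hnn); exact: spn0.
  rewrite -iterS; apply: spn_mem; exact: ing.
have minv : forall z, z \in g -> spn g (m z).
  move=> z zg; have -> : m z = nn z + s z by rewrite /nn subrK.
  by apply: spnD; [apply: ninv | apply: sinv].
have xg : spn g x by apply: spn_sub tg (in_span_spn xt).
have [n [b [bi bsp]]] := basis_ex (sfam g).
have toB y : spn g y -> exists r, y = ev b r by move=> h; apply/bsp.
have /fin_all_exists [rm hrm] : forall i, exists r : 'rV[F]_n, m (b i) = ev b r.
  move=> i; apply: toB; apply: (spn_inv hm minv).
  by apply/bsp; exists (delta_mx 0 i); rewrite ev_delta.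
have /fin_all_exists [rs hrs] : forall i, exists r : 'rV[F]_n, s (b i) = ev b r.
  move=> i; apply: toB; apply: (spn_inv hs sinv).
  by apply/bsp; exists (delta_mx 0 i); rewrite ev_delta.
pose M := \matrix_(i, j) rm i 0 j.
pose S := \matrix_(i, j) rs i 0 j.
have hM i : m (b i) = \sum_(j < n) M i j *: b j.
  by rewrite hrm /ev; apply: eq_bigr => j _; rewrite mxE.
have hS i : s (b i) = \sum_(j < n) S i j *: b j.
  by rewrite hrs /ev; apply: eq_bigr => j _; rewrite mxE.
have eM := ev_mat hm hM.
have eS := ev_mat hs hS.
have [c xc] := toB _ xg.
exists n, b, c, M, S; split => //.
- apply: mx_ext => c'; apply: (indep_inj bi).
  by rewrite !mulmxA -eM -eS -eS -eM ms.
split.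
  have [Nb hNb] := @bound_seq _ _ _ hnn [seq b i | i <- enum 'I_n] (fun z _ => lnn z).
  exists Nb => z; apply: (indep_inj bi).
  have -> : ev b (iter Nb (fun z => z *m (M - S)) z) = iter Nb nn (ev b z).
    elim: Nb {hNb} => //= k IH.
    by rewrite mulmxBr (linB (ev_lin b)) -eM -eS IH.
  rewrite ev_comp; last exact: lin_iter.
  rewrite (lin0 (ev_lin b)) /ev big1 // => i _.
  by rewrite hNb ?scaler0 //; apply: map_f; rewrite mem_enum.
exact: diag_Peig (diag _ _ _ bi hS).
Qed.

End Model2.

Section Lnil.
Variable F : fieldType.
Variable V : lmodType F.

Lemma iter_comm (f g : V -> V) : (forall v, f (g v) = g (f v)) ->
  forall k v, f (iter k g v) = iter k g (f v).
Proof. by move=> h; elim=> //= k IH v; rewrite h IH. Qed.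

Lemma lnil (m s u e : V -> V) :
  lin s -> lin u -> lin e ->
  (forall v, m v = s (u v)) -> (forall v, s (u v) = u (s v)) ->
  (forall v, s (e v) = s v) -> (forall v, e (s v) = s v) ->
  (forall v, e (u v) = u v) ->
  (exists z : V -> V, lin z /\ forall v, z (u v) = e v) ->
  locally_weak_unipotent u ->
  locally_nilpotent (fun v => m v - s v).
Proof.
move=> hs hu he msu su se es eu [z [hz zu]] [_ [_ [dec [_ [_ nil]]]]] v.
pose w := fun v => u v - e v.
have hw : lin w by apply: lin_subf.
have msw x : m x - s x = s (w x) by rewrite msu (linB hs) se.
have sw x : w (s x) = s (w x) by rewrite /w (linB hs) su se es.
have itk k x : iter k (fun v => m v - s v) x = iter k s (iter k w x).
  elim: k x => //= k IH x; rewrite IH msw; congr s.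
  by rewrite (iter_comm sw).
have [k0 [w0 [k0k [[y w0y] ->]]]] := dec v.
have ek0 : e k0 = 0 by rewrite -zu k0k (lin0 hz).
have wk0 : w k0 = 0 by rewrite /w k0k ek0 subrr.
have ew0 : e w0 = w0 by rewrite w0y eu.
have [k hk] := nil w0 (ex_intro _ y w0y).
have iw j : iter j w w0 = iter j (fun v => u v - v) w0 /\ e (iter j w w0) = iter j w w0.
  elim: j => [|j [IH1 IH2]] //=; rewrite IH1 in IH2 *.
  by rewrite /w IH2 (linB he) eu IH2.
exists k.+1; rewrite itk (linD (lin_iter hw _)).
rewrite [iter k.+1 w k0]iterSr wk0 (lin0 (lin_iter hw _)) add0r.
rewrite [iter k.+1 w w0]iterS (proj1 (iw k)) hk (lin0 hw).
exact: (lin0 (lin_iter hs _)).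
Qed.

End Lnil.

Section Transfer.
Variables (F K : fieldType) (phi : {rmorphism F -> K}).

Lemma transfer (V W : lmodType F) (mV sV : V -> V) (mW sW : W -> W) (al : V -> W) :
  lin al -> (forall v, al (mV v) = mW (al v)) ->
  (forall x, model phi mV sV x) -> (forall y, model phi mW sW y) ->
  forall x, al (sV x) = sW (al x).
Proof.
move=> hal alm mod1 mod2 x.
have [n1 [b1 [c1 [M1 [S1 [xc hM1 hS1 SM1 [N1 P1]]]]]]] := mod1 x.
have [n2 [b2 [c2 [M2 [S2 [yc hM2 hS2 SM2 [N2 P2]]]]]]] := mod2 (al x).
have := @core_t F K phi W mW n1 n2 (fun c => al (ev b1 c)) (ev b2) M1 S1 M2 S2
  (lin_comp hal (ev_lin b1)) (ev_lin b2).
move=> /(_ _ _ SM1 SM2 N1 N2 P1 P2 c1 c2).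
rewrite -hS1 -hS2 -xc -yc; apply.
- by move=> c; rewrite -hM1 alm.
- by move=> c; rewrite hM2.
- by [].
Qed.

End Transfer.

Section Tens.
Variable F : fieldType.

Lemma lin_ext (X : lmodType F) n (L1 L2 : 'rV[F]_n -> X) : lin L1 -> lin L2 ->
  (forall k, L1 (delta_mx 0 k) = L2 (delta_mx 0 k)) -> forall c, L1 c = L2 c.
Proof.
move=> h1 h2 h c; rewrite (row_sum_delta c) (lin_sum h1) (lin_sum h2).
by apply: eq_bigr => j _; rewrite (linZ h1) (linZ h2) h.
Qed.

Lemma tens_delta n1 n2 (i : 'I_n1) (j : 'I_n2) :
  delta_mx 0 (mxtens_index (i, j)) = (delta_mx (0 : 'I_1) i *t delta_mx (0 : 'I_1) j : 'rV[F]_(n1 * n2)).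
Proof.
apply/rowP => k; case: (mxtens_indexP k) => i' j'; rewrite !mxE !mxtens_indexK /=.
rewrite (can_eq (@mxtens_indexK _ _)) xpair_eqE.
by case: (i' == i); case: (j' == j); rewrite /= ?mulr1 ?mulr0 ?mul0r.
Qed.

Lemma tens_entry (R : pzRingType) n1 n2 (c1 : 'rV[R]_n1) (c2 : 'rV[R]_n2) i j :
  (c1 *t c2 : 'rV_(n1 * n2)) 0 (mxtens_index (i, j)) = c1 0 i * c2 0 j.
Proof. by rewrite mxE mxtens_indexK /= !ord1. Qed.

Lemma ev_tens (V W T : lmodType F) (t : V -> W -> T) :
  (forall w, lin (fun v => t v w)) -> (forall v, lin (t v)) ->
  forall n1 n2 (b1 : 'I_n1 -> V) (b2 : 'I_n2 -> W) (c1 : 'rV[F]_n1) (c2 : 'rV[F]_n2),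
  ev (fun k => t (b1 (mxtens_unindex k).1) (b2 (mxtens_unindex k).2))
     (c1 *t c2 : 'rV_(n1 * n2)) = t (ev b1 c1) (ev b2 c2).
Proof.
move=> hl hr n1 n2 b1 b2 c1 c2.
rewrite /ev (lin_sum (hl _)).
under [RHS]eq_bigr => i _ do rewrite (linZ (hl _)) (lin_sum (hr _)) scaler_sumr.
rewrite pair_big /=.
rewrite (reindex (@mxtens_index n1 n2)); last first.
  by exists (@mxtens_unindex n1 n2) => p _; [exact: mxtens_indexK | exact: mxtens_unindexK].
apply: eq_bigr => -[i j] _.
have e1 : Ordinal (@mxtens_index_proof1 n1 n2 (mxtens_index (i, j))) = i :=
  f_equal fst (@mxtens_indexK n1 n2 (i, j)).
have e2 : Ordinal (@mxtens_index_proof2 n1 n2 (mxtens_index (i, j))) = j :=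
  f_equal snd (@mxtens_indexK n1 n2 (i, j)).
by rewrite e1 e2 tens_entry (linZ (hr _)) scalerA.
Qed.

Lemma Peig_tens (K : fieldType) n1 n2 (A : 'M[K]_n1) (B : 'M[K]_n2) :
  Peig A -> Peig B -> Peig (A *t B).
Proof.
case: n1 A => [|n1] A; first by move=> _ _; exists 1%:M; split; [exact: unitmx1 | case=> ? hm; exfalso; move: hm; by rewrite mul0n].
case: n2 B => [|n2] B; first by move=> _ _; exists 1%:M; split; [exact: unitmx1 | case=> ? hm; exfalso; move: hm; by rewrite muln0].
move=> [P1 [u1 h1]] [P2 [u2 h2]]; exists (P1 *t P2); split.
  exact: tensmx_unit.
move=> k; case: (mxtens_indexP k) => i j.
have -> : row (mxtens_index (i, j)) (P1 *t P2) = row i P1 *t row j P2.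
  apply/rowP => l; case: (mxtens_indexP l) => i' j'.
  by rewrite mxE tensmxE tens_entry !mxE.
have [d hd] := h1 i; have [e he] := h2 j; exists (d * e).
rewrite (tensmx_mul (row i P1) (row j P2) A B) hd he; apply/rowP => l; case: (mxtens_indexP l) => i' j'.
by rewrite [RHS]mxE !tens_entry !mxE mulrACA.
Qed.

End Tens.

Lemma expr0_ge (R : pzSemiRingType) (x : R) a j : x ^+ a = 0 -> (a <= j)%N -> x ^+ j = 0.
Proof. by move=> h aj; rewrite -(subnKC aj) exprD h mul0r. Qed.

Lemma nilpm_add (R : pzRingType) p (Y Z : 'M[R]_p) :
  Y *m Z = Z *m Y -> nilpm Y -> nilpm Z -> nilpm (Y + Z).
Proof.
case: p Y Z => [|p] Y Z YZ [a ha] [b hb].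
  by exists 0%N => z /=; exact: thinmx0.
have toP (X : 'M[R]_p.+1) k : (forall z : 'rV_p.+1, iter k (fun z => z *m X) z = 0) -> X ^+ k = 0.
  move=> h; apply/row_matrixP => i; rewrite rowE.
  have := h (delta_mx 0 i); rewrite iter_mulmx => ->.
  by apply/rowP => j; rewrite !mxE.
have Ya := toP _ _ ha; have Zb := toP _ _ hb.
exists (a + b)%N => z; rewrite iter_mulmx.
have cYZ : GRing.comm Y Z by exact: YZ.
rewrite (exprDn_comm _ cYZ) big1 ?mulmx0 // => i _.
case: (leqP b i) => bi.
  by rewrite (expr0_ge Zb bi) mulr0 mul0rn.
have : (a <= a + b - i)%N by rewrite -addnBA ?leq_addr // ltnW.
by move/(expr0_ge Ya) => ->; rewrite mul0r mul0rn.
Qed.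

Lemma iter_tens (R : comPzRingType) n1 n2 (A : 'M[R]_n1) (B : 'M[R]_n2) k
  (r1 : 'rV[R]_n1) (r2 : 'rV[R]_n2) :
  iter k (fun z : 'rV_(n1 * n2) => z *m (A *t B)) (r1 *t r2) =
  iter k (fun z => z *m A) r1 *t iter k (fun z => z *m B) r2.
Proof.
elim: k => //= k ->.
exact: (@tensmx_mul R 1 n1 1 n2 n1 n2).
Qed.

Lemma tensmxBr (R : pzRingType) m n p q (A : 'M[R]_(m, n)) (B C : 'M[R]_(p, q)) :
  A *t (B - C) = A *t B - A *t C.
Proof. by apply/matrixP => i j; rewrite !mxE mulrBr. Qed.

Lemma tensmxBl (R : pzRingType) m n p q (A B : 'M[R]_(m, n)) (C : 'M[R]_(p, q)) :
  (A - B) *t C = A *t C - B *t C.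
Proof. by apply/matrixP => i j; rewrite !mxE mulrBl. Qed.

Section Tens2.
Variable F : fieldType.

Lemma lin_mulmx n (X : 'M[F]_n) : lin (fun z : 'rV[F]_n => z *m X).
Proof. by move=> a x y; rewrite mulmxDl scalemxAl. Qed.

Lemma lin_zero (V W : lmodType F) : lin (fun _ : V => (0 : W)).
Proof. by move=> a x y; rewrite scaler0 addr0. Qed.

Lemma nilpm_tensr n1 n2 (A : 'M[F]_n1) (B : 'M[F]_n2) : nilpm B -> nilpm (A *t B).
Proof.
move=> [k hk]; exists k.
move=> z.
have L := @lin_ext F _ _ (iter k (fun z : 'rV_(n1 * n2) => z *m (A *t B))) (fun _ => 0)
  (lin_iter (@lin_mulmx _ (A *t B)) _) (@lin_zero _ _).
apply: L => l.
case: (mxtens_indexP l) => i j; rewrite tens_delta iter_tens hk.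
by rewrite tensmx0.
Qed.

Lemma nilpm_tensl n1 n2 (A : 'M[F]_n1) (B : 'M[F]_n2) : nilpm A -> nilpm (A *t B).
Proof.
move=> [k hk]; exists k.
move=> z.
have L := @lin_ext F _ _ (iter k (fun z : 'rV_(n1 * n2) => z *m (A *t B))) (fun _ => 0)
  (lin_iter (@lin_mulmx _ (A *t B)) _) (@lin_zero _ _).
apply: L => l.
case: (mxtens_indexP l) => i j; rewrite tens_delta iter_tens hk.
by rewrite tens0mx.
Qed.

End Tens2.

Section TransferTens.
Variables (F K : fieldType) (phi : {rmorphism F -> K}).

Lemma transfer_tens (V W T : lmodType F) (t : V -> W -> T) :
  (forall w, lin (fun v => t v w)) -> (forall v, lin (t v)) ->
  forall (mV sV : V -> V) (mW sW : W -> W) (mT sT : T -> T),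
  lin mT -> (forall v w, mT (t v w) = t (mV v) (mW w)) ->
  (forall x, model phi mV sV x) -> (forall y, model phi mW sW y) ->
  (forall z, model phi mT sT z) ->
  forall v w, sT (t v w) = t (sV v) (sW w).
Proof.
move=> hl hr mV sV mW sW mT sT hmT mTt modV modW modT v w.
have [n1 [b1 [c1 [M1 [S1 [xc1 hM1 hS1 SM1 [N1 P1]]]]]]] := modV v.
have [n2 [b2 [c2 [M2 [S2 [xc2 hM2 hS2 SM2 [N2 P2]]]]]]] := modW w.
have [n3 [b3 [c3 [M3 [S3 [xc3 hM3 hS3 SM3 [N3 P3]]]]]]] := modT (t v w).
pose G := fun k : 'I_(n1 * n2) => t (b1 (mxtens_unindex k).1) (b2 (mxtens_unindex k).2).
have evG (a1 : 'rV[F]_n1) (a2 : 'rV[F]_n2) : ev G (a1 *t a2) = t (ev b1 a1) (ev b2 a2).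
  exact: ev_tens.
have hE1 : forall c, ev G (c *m (M1 *t M2)) = mT (ev G c).
  have L := @lin_ext F _ _ (fun c => ev G (c *m (M1 *t M2))) (fun c => mT (ev G c))
    (lin_comp (ev_lin G) (@lin_mulmx _ _ (M1 *t M2))) (lin_comp hmT (ev_lin G)).
  apply: L => l; case: (mxtens_indexP l) => i j; rewrite tens_delta.
  by rewrite (@tensmx_mul F 1 n1 1 n2 n1 n2) !evG mTt hM1 hM2.
have hE2 : forall c, ev b3 (c *m M3) = mT (ev b3 c) by move=> c; rewrite hM3.
have SM : (S1 *t S2) *m (M1 *t M2) = (M1 *t M2) *m (S1 *t S2).
  by rewrite !tensmx_mul SM1 SM2.
have NN : nilpm (M1 *t M2 - S1 *t S2).
  have -> : M1 *t M2 - S1 *t S2 = S1 *t (M2 - S2) + (M1 - S1) *t M2.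
    by rewrite tensmxBr tensmxBl [RHS]addrC addrA subrK.
  apply: nilpm_add; last 2 first.
  - exact: nilpm_tensr.
  - exact: nilpm_tensl.
  rewrite !tensmx_mul; congr (_ *t _).
    by rewrite mulmxBr mulmxBl SM1.
  by rewrite mulmxBr mulmxBl SM2.
have PP : Peig (map_mx phi (S1 *t S2)) by rewrite map_mxT; exact: Peig_tens.
have e0 : ev G (c1 *t c2) = ev b3 c3 by rewrite evG -xc1 -xc2 -xc3.
have := core_t (ev_lin G) (ev_lin b3) hE1 hE2 SM SM3 NN N3 PP P3 e0.
rewrite (@tensmx_mul F 1 n1 1 n2 n1 n2) evG -hS1 -hS2 -xc1 -xc2 -hS3 -xc3.
by move=> ->.
Qed.

End TransferTens.

Section Final.
Variables (F K : fieldType) (phi : {rmorphism F -> K}).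

Lemma model_id (V : lmodType F) (m : V -> V) : (forall v, m v = v) ->
  forall y, model phi m (fun v => v) y.
Proof.
move=> hm y; exists 1%N, (fun _ => y), (const_mx 1), 1%:M, 1%:M; split.
- by rewrite /ev big_ord1 mxE scale1r.
- by move=> c; rewrite hm mulmx1.
- by move=> c; rewrite mulmx1.
- by rewrite mulmx1 ?mul1mx.
split.
  by exists 1%N => z /=; rewrite subrr mulmx0.
exists 1%:M; split; first exact: unitmx1.
by move=> i; exists 1; rewrite map_mx1 mulmx1 scale1r.
Qed.

Lemma JCmodel (V : lmodType F) (m s u e : V -> V) :
  lin m -> lin e -> semisimple phi s -> unit_End_f e s ->
  locally_weak_unipotent u -> unit_End_f e u ->
  (forall v, m v = s (u v) /\ m v = u (s v)) ->
  forall x, model phi m s x.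
Proof.
move=> hm he [lfs dg] [hs [se _]] hlwu [hu [ue [z [hz [_ zu]]]]] msu.
apply: pair_model => //.
- by move=> v; rewrite (proj1 (msu (s v))) (proj2 (msu v)).
- apply: (@lnil _ _ m s u e hs hu he) => //.
  + by move=> v; case: (msu v).
  + by move=> v; case: (msu v) => <- <-.
  + by move=> v; case: (se v).
  + by move=> v; case: (se v).
  + by move=> v; case: (ue v).
  + by exists z; split => // v; case: (zu v).
Qed.

End Final.

Section MLemmas.
Variables (F : fieldType) (g : lmodType F) (C : gmodule g -> Prop) (du : dual_family g).

Lemma in_M_comp (x y : gfamily g) : in_M C du x -> in_M C du y ->
  in_M C du (fun V v => x V (y V v)).
Proof.
move=> [[xE xN] [xT xV]] [[yE yN] [yT yV]]; split; [split|split].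
- move=> V CV; have [lx dx] := xE V CV; have [ly dy] := yE V CV; split.
    exact: lin_comp.
  by move=> p hp; apply: (dy (fun v => p (x V v))); apply: dx.
- by move=> V W al CV CW hal v; rewrite (xN V W al) ?(yN V W al).
- by move=> V W T t CV CW CT ht v w; rewrite (yT V W T t) // (xT V W T t).
- by move=> V0 CV0 tr v; rewrite (yV V0) // (xV V0).
Qed.

Lemma comm_inv (V : lmodType F) (m mi e x : V -> V) :
  (forall y, e (x y) = x y) -> (forall y, mi (m y) = e y) ->
  (forall y, m (x y) = x (m y)) -> (forall v, m (mi v) = e v) ->
  (forall v, x (e v) = x v) -> forall v, x (mi v) = mi (x v).
Proof.
move=> ex mim mx mmi xe v.
by rewrite -ex -mim mx mmi xe.
Qed.

End MLemmas.

Unset Implicit Arguments.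
Set Strict Implicit.

Theorem theorem2p19
  (F : fieldType) (charF0 : [pchar F] =i pred0)
  (Fbar : closedFieldType) (iota : {rmorphism F -> Fbar})
  (Fbar_alg : forall z : Fbar, exists p : {poly F},
      p != 0 /\ root (map_poly iota p) z)
  (g : lmodType F) (br : g -> g -> g) (g_lie : is_lie_algebra br)
  (C : gmodule g -> Prop) (C_cat : is_category br C)
  (du : dual_family g) (du_duals : is_category_of_duals C du)
  (e : gfamily g) (e_idem : idempotent_M C du e)
  (m : gfamily g) (m_unit : unit_Me C du e m) (m_lf : locally_finite_M C m)
  (s u : gfamily g)
  (su_JC : forall V, C V ->
      [/\ semisimple iota (s V), unit_End_f (e V) (s V),
          locally_weak_unipotent (u V), unit_End_f (e V) (u V)
        & forall v, m V v = s V (u V v) /\ m V v = u V (s V v)])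
  (su_du : forall V, C V -> End_du du V (s V) /\ End_du du V (u V)) :
  [/\ unit_Me C du e s /\ semisimple_M iota C s,
      unit_Me C du e u /\ locally_weak_unipotent_M C u,
      (forall V, C V -> forall v, m V v = s V (u V v) /\ m V v = u V (s V v))
    & forall s' u' : gfamily g,
        unit_Me C du e s' -> semisimple_M iota C s' ->
        unit_Me C du e u' -> locally_weak_unipotent_M C u' ->
        (forall V, C V -> forall v, m V v = s' V (u' V v) /\ m V v = u' V (s' V v)) ->
        forall V, C V -> forall v, s' V v = s V v /\ u' V v = u V v].
Proof.
have [eM eidem] := e_idem.
have [[mM mEe] [mi [[miM miEe] mmi]]] := m_unit.
have linM (x : gfamily g) (hx : in_M C du x) V (CV : C V) : lin (x V) := (hx.1.1 V CV).1.
have natM (x : gfamily g) (hx : in_M C du x) V W (al : gcar V -> gcar W) :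
  C V -> C W -> is_hom al -> forall v, al (x V v) = x W (al v).
  by move=> CV CW hal; apply: hx.1.2.
have tenM (x : gfamily g) (hx : in_M C du x) V W T (t : gcar V -> gcar W -> gcar T) : C V -> C W -> C T ->
  is_tensor t -> forall v w, x T (t v w) = t (x V v) (x W w).
  by move=> CV CW CT ht; apply: hx.2.1.
have trvM (x : gfamily g) (hx : in_M C du x) V0 : C V0 -> trivial_1dim V0 ->
  forall v, x V0 v = v.
  by move=> CV0 tr; apply: hx.2.2.
have mod_s V (CV : C V) : forall x, model iota (m V) (s V) x.
  case: (su_JC V CV) => ss sE lu uE prod.
  exact: (JCmodel (linM _ mM _ CV) (linM _ eM _ CV) ss sE lu uE prod).
have nat_s V W (al : gcar V -> gcar W) : C V -> C W -> is_hom al ->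
    forall v, al (s V v) = s W (al v).
  move=> CV CW [hal hact].
  apply: (transfer hal _ (mod_s V CV) (mod_s W CW)).
  exact: (natM _ mM V W al CV CW (conj hal hact)).
have ten_s V W T (t : gcar V -> gcar W -> gcar T) : C V -> C W -> C T -> is_tensor t ->
    forall v w, s T (t v w) = t (s V v) (s W w).
  move=> CV CW CT ht; have [hl [hr _]] := ht.
  apply: (transfer_tens hl hr (linM _ mM _ CT) _ (mod_s V CV) (mod_s W CW) (mod_s T CT)).
  exact: (tenM _ mM V W T t CV CW CT ht).
have trv_s V0 : C V0 -> trivial_1dim V0 -> forall v, s V0 v = v.
  move=> CV0 tr v.
  exact: (transfer (@lin_idf _ _) (fun _ => erefl) (mod_s V0 CV0)
    (model_id iota (trvM _ mM _ CV0 tr)) v).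
have unitE (x : gfamily g) V : C V -> unit_Me C du e x -> unit_End_f (e V) (x V).
  move=> CV [[xM xEe] [n [[nM nEe] xn]]]; split; first exact: linM.
  split; first exact: xEe.
  by exists (n V); split; [exact: linM | split; [exact: nEe | exact: xn]].
have nat_u V W (al : gcar V -> gcar W) : C V -> C W -> is_hom al ->
    forall v, al (u V v) = u W (al v).
  move=> CV CW hal v.
  case: (su_JC V CV) => _ _ _ [_ [ueV _]] prodV.
  case: (su_JC W CW) => _ [_ [_ [zW [_ [_ zsW]]]]] _ [_ [ueW _]] prodW.
  transitivity (e W (al (u V v))).
    by rewrite -(natM _ eM V W al CV CW hal) (proj2 (ueV v)).
  rewrite -(proj2 (zsW _)) -(nat_s V W al CV CW hal) -(proj1 (prodV v)).
  by rewrite (natM _ mM V W al CV CW hal) (proj1 (prodW _)) (proj2 (zsW _)) (proj2 (ueW _)).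
have ten_u V W T (t : gcar V -> gcar W -> gcar T) : C V -> C W -> C T -> is_tensor t ->
    forall v w, u T (t v w) = t (u V v) (u W w).
  move=> CV CW CT ht v w.
  case: (su_JC V CV) => _ _ _ [_ [ueV _]] prodV.
  case: (su_JC W CW) => _ _ _ [_ [ueW _]] prodW.
  case: (su_JC T CT) => _ [_ [_ [zT [_ [_ zsT]]]]] _ [_ [ueT _]] prodT.
  symmetry; transitivity (e T (t (u V v) (u W w))).
    by rewrite (tenM _ eM V W T t CV CW CT ht) (proj2 (ueV v)) (proj2 (ueW w)).
  rewrite -(proj2 (zsT _)) (ten_s V W T t CV CW CT ht) -(proj1 (prodV v)) -(proj1 (prodW w)).
  by rewrite -(tenM _ mM V W T t CV CW CT ht) (proj1 (prodT _)) (proj2 (zsT _)) (proj2 (ueT _)).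
have trv_u V0 : C V0 -> trivial_1dim V0 -> forall v, u V0 v = v.
  move=> CV0 tr v; case: (su_JC V0 CV0) => _ _ _ _ prod.
  have := proj2 (prod v); rewrite (trv_s V0 CV0 tr v) (trvM _ mM V0 CV0 tr).
  by move=> h; rewrite -h.
have sM : in_M C du s.
  split; [split|split].
  - by move=> V CV; case: (su_du V CV).
  - exact: nat_s.
  - exact: ten_s.
  - exact: trv_s.
have uM : in_M C du u.
  split; [split|split].
  - by move=> V CV; case: (su_du V CV).
  - exact: nat_u.
  - exact: ten_u.
  - exact: trv_u.
have mis V : C V -> forall v, s V (mi V v) = mi V (s V v).
  move=> CV; case: (su_JC V CV) => _ [_ [seV _]] _ _ prod.
  apply: (@comm_inv _ _ (m V) (mi V) (e V) (s V)).
  - by move=> y; have [? ?] := seV y.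
  - by move=> y; have [? ?] := mmi V CV y.
  - by move=> y; rewrite (proj1 (prod (s V y))) (proj2 (prod y)).
  - by move=> y; have [? ?] := mmi V CV y.
  - by move=> y; have [? ?] := seV y.
have miu V : C V -> forall v, u V (mi V v) = mi V (u V v).
  move=> CV; case: (su_JC V CV) => _ _ _ [_ [ueV _]] prod.
  apply: (@comm_inv _ _ (m V) (mi V) (e V) (u V)).
  - by move=> y; have [? ?] := ueV y.
  - by move=> y; have [? ?] := mmi V CV y.
  - by move=> y; rewrite (proj2 (prod (u V y))) (proj1 (prod y)).
  - by move=> y; have [? ?] := mmi V CV y.
  - by move=> y; have [? ?] := ueV y.
split.
- split; last by move=> V CV; case: (su_JC V CV).
  split.
    split => // V CV v; case: (su_JC V CV) => _ [_ [seV _]] _ _ _; exact: seV.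
  exists (fun V v => u V (mi V v)); split.
    split; first exact: in_M_comp.
    move=> V CV v; case: (su_JC V CV) => _ _ _ [_ [ueV _]] _.
    by rewrite (proj1 (miEe V CV v)) (proj2 (ueV _)).
  move=> V CV v; case: (su_JC V CV) => _ _ _ _ prod.
  by rewrite -(proj1 (prod _)) -mis // -(proj2 (prod _)); split; case: (mmi V CV v).
- split; last by move=> V CV; case: (su_JC V CV).
  split.
    split => // V CV v; case: (su_JC V CV) => _ _ _ [_ [ueV _]] _; exact: ueV.
  exists (fun V v => s V (mi V v)); split.
    split; first exact: in_M_comp.
    move=> V CV v; case: (su_JC V CV) => _ [_ [seV _]] _ _ _.
    by rewrite (proj1 (miEe V CV v)) (proj2 (seV _)).
  move=> V CV v; case: (su_JC V CV) => _ _ _ _ prod.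
  by rewrite -(proj2 (prod _)) -miu // -(proj1 (prod _)); split; case: (mmi V CV v).
- by move=> V CV; case: (su_JC V CV).
move=> s' u' hs' ss' hu' lu' prod' V CV v.
have mod' : forall x, model iota (m V) (s' V) x.
  exact: (JCmodel (linM _ mM _ CV) (linM _ eM _ CV) (ss' V CV) (unitE _ V CV hs')
    (lu' V CV) (unitE _ V CV hu') (prod' V CV)).
have Hs x : s' V x = s V x.
  exact: (transfer (@lin_idf _ _) (fun _ => erefl) mod' (mod_s V CV) x).
split; first exact: Hs.
case: (su_JC V CV) => _ [_ [_ [z [_ [_ zs]]]]] _ [_ [ueV _]] prod.
have [_ [ue' _]] := unitE _ V CV hu'.
rewrite -(proj2 (ue' v)) -(proj2 (zs _)) -Hs -(proj1 (prod' V CV v)).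
by rewrite (proj1 (prod v)) (proj2 (zs _)) (proj2 (ueV _)).
Qed.
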